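(* The function $h(s) = s\,\dfrac{\theta_o'(s)}{\theta_o(s)}$, $s>0$, is strictly decreasing on $[1/4,\infty)$, and satisfies $h(s) \ge \dfrac{\theta_o'(1)}{\theta_o(1)}$ for all $0 < s \le 1/4$.
   Context: For $s>0$, $\theta_o(s) = \sum_{k\in\mathbb{Z}} e^{-\pi (2k+1)^2 s}$. *)

(* Defs.v *)
From Stdlib Require Import Reals ClassicalEpsilon.
Open Scope R_scope.

(* Symmetric partial sum  sum_{k=-N}^{N} exp(-pi (2k+1)^2 s),
   indexed by n = 0..2N with k = n - N. *)
Definition theta_o_partial (s : R) (N : nat) : R :=
  sum_f_R0 (fun n => exp (- PI * (2 * (INR n - INR N) + 1) ^ 2 * s)) (2 * N).

(* theta_o(s) = sum_{k in Z} exp(-pi (2k+1)^2 s): the limit of the symmetric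
   partial sums (the series converges absolutely for s > 0). *)
Definition theta_o (s : R) : R :=
  epsilon (inhabits 0) (fun l => Un_cv (theta_o_partial s) l).

(* Main.v *)
Require Import Defs.
From Coquelicot Require Import Coquelicot.
From Stdlib Require Import Reals Lia Lra Psatz Arith ClassicalEpsilon.
Open Scope R_scope.

Definition aa (n:nat) : R :=
  if (Nat.odd n && Nat.eqb (Nat.sqrt n * Nat.sqrt n) n)%bool then 1 else 0.

Lemma aa_sq j : aa ((2*j+1)*(2*j+1)) = 1.
Proof.
  unfold aa. rewrite Nat.sqrt_square, Nat.eqb_refl.
  replace (Nat.odd ((2*j+1)*(2*j+1))) with true; [reflexivity|].
  symmetry. apply Nat.odd_spec. exists (2*j*j+2*j)%nat. lia.
Qed.

Lemma aa_between J n : ((2*J+1)*(2*J+1) < n < (2*J+3)*(2*J+3))%nat -> aa n = 0.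
Proof.
  intros H. unfold aa.
  destruct (Nat.odd n) eqn:Ho; [|reflexivity].
  destruct (Nat.eqb_spec (Nat.sqrt n * Nat.sqrt n) n) as [E|E]; [|reflexivity].
  exfalso. apply Nat.odd_spec in Ho. destruct Ho as [k Hk].
  set (r := Nat.sqrt n) in *.
  assert (2*J+1 < r)%nat by nia.
  assert (r < 2*J+3)%nat by nia.
  assert (r = 2*J+2)%nat by lia. subst r. nia.
Qed.

Lemma aa_bound n : 0 <= aa n <= 1.
Proof. unfold aa. destruct (_ && _)%bool; lra. Qed.

Lemma aa_0 : aa 0 = 0.
Proof. reflexivity. Qed.

Lemma sum_zero_range (f : nat -> R) L :
  (forall i, (i <= L)%nat -> f i = 0) -> sum_f_R0 f L = 0.
Proof. apply sum_eq_R0. Qed.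

Lemma sumS (f:nat->R) n : sum_f_R0 f (S n) = sum_f_R0 f n + f (S n).
Proof. reflexivity. Qed.

Lemma sparse (F : nat -> R) J :
  sum_f_R0 (fun n => aa n * F n) ((2*J+1)*(2*J+1)) =
  sum_f_R0 (fun j => F ((2*j+1)*(2*j+1))%nat) J.
Proof.
  induction J as [|J IH].
  - simpl. rewrite aa_0. replace (aa 1) with 1 by reflexivity. ring.
  - rewrite (tech2 _ ((2*J+1)*(2*J+1)) ((2*S J+1)*(2*S J+1))) by nia.
    rewrite IH. rewrite (sumS (fun j => F _)). f_equal.
    replace ((2 * S J + 1) * (2 * S J + 1) - S ((2 * J + 1) * (2 * J + 1)))%nat
      with (S (8*J+6))%nat by nia.
    rewrite sumS. rewrite sum_eq_R0.
    + replace (S ((2 * J + 1) * (2 * J + 1)) + S (8 * J + 6))%nat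
        with ((2 * S J + 1) * (2 * S J + 1))%nat by nia.
      rewrite aa_sq. ring.
    + intros i Hi. rewrite (aa_between J). ring. nia.
Qed.

Definition cc (k n:nat) : R := INR n ^ k * aa n.
Definition P (k:nat) (u:R) : R := PSeries (cc k) (exp (-PI*u)).

Lemma radius_aa : Rbar_le 1 (CV_radius aa).
Proof.
  destruct (CV_radius_bounded aa) as [Hub _].
  apply Hub. exists 1. intros n. rewrite pow1, Rmult_1_r.
  destruct (aa_bound n). rewrite Rabs_pos_eq; lra.
Qed.

Lemma cc_succ k n : PS_incr_1 (PS_derive (cc k)) n = cc (S k) n.
Proof.
  destruct n as [|n].
  - unfold cc; simpl. rewrite aa_0. unfold zero; simpl. ring.
  - change (PS_derive (cc k) n = cc (S k) (S n)). unfold PS_derive, cc.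
    change (INR (S n) ^ S k) with (INR (S n) * INR (S n) ^ k). ring.
Qed.

Lemma radius_cc k : Rbar_le 1 (CV_radius (cc k)).
Proof.
  induction k as [|k IH].
  - rewrite (CV_radius_ext (cc 0) aa). apply radius_aa.
    intros n; unfold cc; simpl; ring.
  - rewrite <- (CV_radius_ext _ _ (cc_succ k)).
    rewrite CV_radius_incr_1, CV_radius_derive. exact IH.
Qed.

Lemma exp_pos_lt1 u : 0 < u -> 0 < exp (-PI*u) < 1.
Proof.
  intros Hu. split. apply exp_pos. rewrite <- exp_0. apply exp_increasing.
  assert (0 < PI) by apply PI_RGT_0. nra.
Qed.

Lemma inside k x : 0 < x < 1 -> Rbar_lt (Rabs x) (CV_radius (cc k)).
Proof.
  intros Hx. eapply Rbar_lt_le_trans; [|apply radius_cc].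
  simpl. rewrite Rabs_pos_eq; lra.
Qed.

Lemma P_derive k u : 0 < u -> is_derive (P k) u (-PI * P (S k) u).
Proof.
  intros Hu. unfold P.
  set (x := exp (-PI*u)).
  assert (Hx : 0 < x < 1) by (apply exp_pos_lt1; auto).
  assert (H1 := is_derive_PSeries (cc k) x (inside k x Hx)).
  assert (H2 : is_derive (fun u => exp (-PI*u)) u (-PI * x)).
  { unfold x. auto_derive; auto. ring. }
  assert (H := is_derive_comp (PSeries (cc k)) (fun u => exp(-PI*u)) u _ _ H1 H2).
  replace (-PI * PSeries (cc (S k)) x) with (scal (-PI*x) (PSeries (PS_derive (cc k)) x)).
  exact H.
  rewrite <- (PSeries_ext _ _ x (cc_succ k)), PSeries_incr_1.
  unfold scal; simpl; unfold mult; simpl. ring.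
Qed.

Definition G (k:nat) (x:R) (J:nat) : R :=
  sum_f_R0 (fun j => INR ((2*j+1)*(2*j+1)) ^ k * x ^ ((2*j+1)*(2*j+1))) J.

Lemma P_lim k u : 0 < u -> Un_cv (G k (exp (-PI*u))) (P k u).
Proof.
  intros Hu. set (x := exp (-PI*u)).
  assert (Hx : 0 < x < 1) by (apply exp_pos_lt1; auto).
  assert (H := PSeries_correct _ _ (CV_radius_inside _ _ (inside k x Hx))).
  apply is_pseries_R in H. apply is_series_Reals in H.
  unfold P. fold x. intros eps Heps.
  destruct (H eps Heps) as [N HN]. exists N. intros J HJ.
  unfold G. rewrite <- (sparse (fun n => INR n ^ k * x ^ n)).
  rewrite (sum_eq _ (fun n => cc k n * x ^ n)).
  apply HN. nia.
  intros i _. unfold cc. ring.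
Qed.

Lemma exp_pow_INR x n : exp x ^ n = exp (INR n * x).
Proof.
  induction n as [|n IH].
  - simpl. rewrite Rmult_0_l, exp_0. reflexivity.
  - rewrite S_INR. simpl pow. rewrite IH, <- exp_plus. f_equal. ring.
Qed.

Definition T (s:R) (j:nat) : R := exp (-PI * (2 * INR j + 1)^2 * s).

Lemma G0_T s J : G 0 (exp (-PI*s)) J = sum_f_R0 (T s) J.
Proof.
  unfold G. apply sum_eq. intros i _. unfold T.
  rewrite pow_O, Rmult_1_l, exp_pow_INR. f_equal.
  rewrite mult_INR, plus_INR, mult_INR. simpl (INR 2). simpl (INR 1). ring.
Qed.

Lemma sum_rev (f:nat->R) n : sum_f_R0 f n = sum_f_R0 (fun i => f (n - i)%nat) n.
Proof.
  induction n as [|n IH].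
  - reflexivity.
  - rewrite sumS, IH. rewrite (decomp_sum (fun i => f (S n - i)%nat) (S n)) by lia.
    simpl pred. rewrite Nat.sub_0_r. simpl (fun i => f (S n - S i)%nat). ring.
Qed.

Definition Hp (s:R) (N:nat) : R :=
  match N with O => 0 | S M => sum_f_R0 (T s) M end.

Lemma theta_partial_eq s N :
  theta_o_partial s N = sum_f_R0 (T s) N + Hp s N.
Proof.
  unfold theta_o_partial. destruct N as [|M].
  - simpl. unfold T. rewrite Rplus_0_r. simpl (INR 0). f_equal. ring.
  - rewrite (tech2 _ M (2 * S M)) by lia.
    rewrite sum_rev. simpl Hp. rewrite Rplus_comm. f_equal.
    + replace (2 * S M - S M)%nat with (S M) by lia.
      apply sum_eq. intros i Hi. unfold T. f_equal.
      rewrite plus_INR. ring.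
    + apply sum_eq. intros i Hi. unfold T. f_equal.
      rewrite minus_INR by lia. rewrite S_INR. ring.
Qed.

Lemma theta_eq s : 0 < s -> theta_o s = 2 * P 0 s.
Proof.
  intros Hs.
  assert (H1 : Un_cv (fun N => sum_f_R0 (T s) N) (P 0 s)).
  { intros eps He. destruct (P_lim 0 s Hs eps He) as [N HN]. exists N.
    intros n Hn. rewrite <- G0_T. apply HN; auto. }
  assert (H2 : Un_cv (Hp s) (P 0 s)).
  { intros eps He. destruct (H1 eps He) as [N HN]. exists (S N).
    intros n Hn. destruct n as [|n]; [lia|]. simpl. apply HN. lia. }
  assert (H3 : Un_cv (theta_o_partial s) (2 * P 0 s)).
  { intros eps He. destruct (CV_plus _ _ _ _ H1 H2 eps He) as [N HN]. exists N.
    intros n Hn. rewrite theta_partial_eq. replace (2 * P 0 s) with (P 0 s + P 0 s) by ring.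
    apply HN; auto. }
  unfold theta_o.
  assert (E := epsilon_spec (inhabits 0) (fun l => Un_cv (theta_o_partial s) l)
                 (ex_intro _ _ H3)).
  simpl in E. eapply UL_sequence; eauto.
Qed.

Lemma deriv_loc (f g : R -> R) s l :
  0 < s -> (forall t, 0 < t -> f t = g t) -> derivable_pt_lim g s l ->
  derivable_pt_lim f s l.
Proof.
  intros Hs Hfg Hg eps He. destruct (Hg eps He) as [d Hd].
  assert (Hd2 : 0 < Rmin d (s/2)) by (apply Rmin_pos; [apply cond_pos|lra]).
  exists (mkposreal _ Hd2). intros h Hh0 Hh. simpl in Hh.
  assert (Hh1 := Rmin_l d (s/2)). assert (Hh2 := Rmin_r d (s/2)).
  assert (Ha : Rabs h < s/2) by lra. apply Rabs_def2 in Ha.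
  rewrite !Hfg by lra. apply Hd; auto. lra.
Qed.

Lemma theta_deriv s : 0 < s -> derivable_pt_lim theta_o s (-2*PI*P 1 s).
Proof.
  intros Hs. apply deriv_loc with (g := fun t => 2 * P 0 t); auto.
  intros; apply theta_eq; auto.
  apply is_derive_Reals.
  replace (-2*PI*P 1 s) with (scal 2 (-PI * P 1 s)).
  apply is_derive_scal. apply P_derive; auto.
  unfold scal; simpl; unfold mult; simpl. ring.
Qed.

Lemma cv_const c : Un_cv (fun _ => c) c.
Proof. intros e He. exists O. intros. unfold R_dist. rewrite Rminus_diag, Rabs_R0. auto. Qed.

Lemma lim_le u l c : Un_cv u l -> (forall n, u n <= c) -> l <= c.
Proof. intros H1 H2. eapply Rle_cv_lim; [exact H2|exact H1|apply cv_const]. Qed.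

Lemma lim_ge u l c : Un_cv u l -> (forall n, c <= u n) -> c <= l.
Proof. intros H1 H2. eapply Rle_cv_lim; [exact H2|apply cv_const|exact H1]. Qed.

Lemma sum_nonneg (f:nat->R) n : (forall i, 0 <= f i) -> 0 <= sum_f_R0 f n.
Proof. intros H. induction n; simpl; [apply H|]. specialize (H (S n)). lra. Qed.

Lemma sum_mono (f:nat->R) n m : (forall i, 0 <= f i) -> (n <= m)%nat ->
  sum_f_R0 f n <= sum_f_R0 f m.
Proof.
  intros H Hnm. induction Hnm; [lra|]. rewrite sumS. specialize (H (S m)). lra.
Qed.

Lemma sum_le_pw (f g:nat->R) n : (forall i, f i <= g i) -> sum_f_R0 f n <= sum_f_R0 g n.
Proof. intros H. induction n; simpl; [apply H|]. specialize (H (S n)). lra. Qed.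

Lemma geom_bound (b:nat->R) r J : 0 <= r < 1 -> (forall i, 0 <= b i) ->
  (forall i, b (S i) <= r * b i) -> (1 - r) * sum_f_R0 b J <= b O.
Proof.
  intros Hr Hb Hs.
  assert (forall K, (1 - r) * sum_f_R0 b K + r * b K <= b O).
  { induction K as [|K IH]; simpl. lra.
    specialize (Hs K). nra. }
  specialize (H J). specialize (Hb J). nra.
Qed.

Lemma pow_le1 x n : 0 <= x <= 1 -> x ^ n <= 1.
Proof. intros H. rewrite <- (pow1 n). apply pow_incr. lra. Qed.

Lemma INR_sq j : INR ((2*j+1)*(2*j+1)) = (2*INR j+1)^2.
Proof. rewrite mult_INR, plus_INR, mult_INR. simpl (INR 2). simpl (INR 1). ring. Qed.

Lemma sq_succ j : ((2*S j+1)*(2*S j+1) = (2*j+1)*(2*j+1) + 8 + 8*j)%nat.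
Proof. lia. Qed.

Lemma G_first k x J : 0 < x -> x <= G k x J.
Proof.
  intros Hx. unfold G. induction J as [|J IH].
  - change (x <= INR 1 ^ k * x ^ 1). rewrite pow1, pow_1. simpl. lra.
  - rewrite sumS. assert (0 <= INR ((2 * S J + 1) * (2 * S J + 1)) ^ k *
       x ^ ((2 * S J + 1) * (2 * S J + 1))).
    { apply Rmult_le_pos; apply pow_le; [apply pos_INR|lra]. }
    lra.
Qed.

Lemma G_nonneg_term k x j : 0 <= x -> 0 <= INR ((2*j+1)*(2*j+1)) ^ k * x ^ ((2*j+1)*(2*j+1)).
Proof. intros. apply Rmult_le_pos; apply pow_le; [apply pos_INR|lra]. Qed.

Lemma G01 x J : 0 <= x -> G 0 x J <= G 1 x J.
Proof.
  intros Hx. unfold G. apply sum_le_pw. intros i. rewrite pow_O, pow_1, INR_sq.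
  assert (0 <= INR i) by apply pos_INR.
  assert (0 <= x ^ ((2*i+1)*(2*i+1))) by (apply pow_le; lra).
  nra.
Qed.

Lemma G_mono k x J : 0 <= x -> G k x J <= G k x (S J).
Proof. intros. unfold G. apply sum_mono. intros; apply G_nonneg_term; auto. lia. Qed.

Lemma G_split k x J : G k x (S J) = x + sum_f_R0 (fun i =>
   INR ((2*S i+1)*(2*S i+1)) ^ k * x ^ ((2*S i+1)*(2*S i+1))) J.
Proof.
  unfold G. rewrite decomp_sum by lia. simpl pred. f_equal.
  change (INR 1 ^ k * x ^ 1 = x). rewrite pow1, pow_1. simpl; ring.
Qed.

Lemma G0_upper x J : 0 < x < 1 -> (x^8)^2 <= 1/100 ->
  G 0 x J <= x * (1 + 100/99 * x^8).
Proof.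
  intros Hx Hy. eapply Rle_trans; [apply G_mono; lra|]. rewrite G_split.
  set (b := fun i => INR ((2*S i+1)*(2*S i+1)) ^ 0 * x ^ ((2*S i+1)*(2*S i+1))).
  assert (Hb : forall i, 0 <= b i) by (intros; apply G_nonneg_term; lra).
  assert (Hr : forall i, b (S i) <= (x^8)^2 * b i).
  { intros i. unfold b. simpl (_ ^ 0). rewrite !Rmult_1_l.
    rewrite (sq_succ (S i)), !pow_add.
    assert (0 <= x ^ ((2 * S i + 1) * (2 * S i + 1))) by (apply pow_le; lra).
    replace (8 * S i)%nat with (8 + 8*i)%nat by lia. rewrite pow_add.
    assert (x ^ (8*i) <= 1) by (apply pow_le1; lra).
    assert (0 <= x ^ (8*i)) by (apply pow_le; lra).
    assert (0 <= x ^ 8) by (apply pow_le; lra).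
    rewrite <- Rsqr_pow2. unfold Rsqr.
    set (A := x ^ ((2 * S i + 1) * (2 * S i + 1))) in *. set (B := x^8) in *.
    set (C := x ^ (8*i)) in *.
    replace (A * B * (B * C)) with ((A*B*B)*C) by ring.
    replace (B * B * A) with ((A*B*B)*1) by ring.
    apply Rmult_le_compat_l; auto.
    apply Rmult_le_pos; [apply Rmult_le_pos|]; auto. }
  assert (0 <= (x^8)^2) by (apply pow_le, pow_le; lra).
  assert (Hr1 : (x^8)^2 < 1) by lra.
  assert (G := geom_bound b ((x^8)^2) J (conj H Hr1) Hb Hr).
  assert (Hb0 : b O = x * x^8).
  { unfold b. simpl. ring. }
  rewrite Hb0 in G.
  assert (0 <= x * x^8) by (apply Rmult_le_pos; [lra|apply pow_le; lra]).
  assert (0 <= sum_f_R0 b J) by (apply sum_nonneg; auto).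
  nra.
Qed.

Lemma ratio_x x i : 0 < x < 1 ->
  x ^ ((2*S (S i)+1)*(2*S (S i)+1)) <= (x^8)^2 * x ^ ((2*S i+1)*(2*S i+1)).
Proof.
  intros Hx.
  rewrite (sq_succ (S i)), !pow_add.
  assert (0 <= x ^ ((2 * S i + 1) * (2 * S i + 1))) by (apply pow_le; lra).
  replace (8 * S i)%nat with (8 + 8*i)%nat by lia. rewrite pow_add.
  assert (x ^ (8*i) <= 1) by (apply pow_le1; lra).
  assert (0 <= x ^ (8*i)) by (apply pow_le; lra).
  assert (0 <= x ^ 8) by (apply pow_le; lra).
  rewrite <- Rsqr_pow2. unfold Rsqr.
  set (A := x ^ ((2 * S i + 1) * (2 * S i + 1))) in *. set (B := x^8) in *.
  set (C := x ^ (8*i)) in *.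
  replace (A * B * (B * C)) with ((A*B*B)*C) by ring.
  replace (B * B * A) with ((A*B*B)*1) by ring.
  apply Rmult_le_compat_l; auto.
  apply Rmult_le_pos; [apply Rmult_le_pos|]; auto.
Qed.

Lemma ratio_INR i :
  (INR ((2*S (S i)+1)*(2*S (S i)+1)))^2 <= 625/81 * (INR ((2*S i+1)*(2*S i+1)))^2.
Proof.
  rewrite !INR_sq, !S_INR.
  assert (0 <= INR i) by apply pos_INR.
  assert (H1 : (3*(2*INR i + 5))^4 <= (5*(2*INR i+3))^4) by (apply pow_incr; lra).
  assert (E1 : ((2 * (INR i + 1 + 1) + 1) ^ 2) ^ 2 = (3*(2*INR i + 5))^4 / 81).
  { field. }
  assert (E2 : 625 / 81 * ((2 * (INR i + 1) + 1) ^ 2) ^ 2 = (5*(2*INR i+3))^4/81).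
  { field. }
  rewrite E1, E2. lra.
Qed.

Lemma G2_upper x J : 0 < x < 1 -> 625/81 * (x^8)^2 <= 1/100 ->
  G 2 x J <= x * (1 + 8100/99 * x^8).
Proof.
  intros Hx Hy. eapply Rle_trans; [apply G_mono; lra|]. rewrite G_split.
  set (b := fun i => INR ((2*S i+1)*(2*S i+1)) ^ 2 * x ^ ((2*S i+1)*(2*S i+1))).
  assert (Hb : forall i, 0 <= b i) by (intros; apply G_nonneg_term; lra).
  assert (Hr : forall i, b (S i) <= (625/81 * (x^8)^2) * b i).
  { intros i. unfold b.
    assert (H1 := ratio_x x i Hx). assert (H2 := ratio_INR i).
    assert (0 <= x ^ ((2*S (S i)+1)*(2*S (S i)+1))) by (apply pow_le; lra).
    assert (0 <= (INR ((2*S (S i)+1)*(2*S (S i)+1)))^2) by (apply pow_le; apply pos_INR).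
    replace (625 / 81 * (x ^ 8) ^ 2 *
      (INR ((2 * S i + 1) * (2 * S i + 1)) ^ 2 * x ^ ((2 * S i + 1) * (2 * S i + 1))))
    with ((625/81 * (INR ((2*S i+1)*(2*S i+1)))^2) * ((x^8)^2 * x ^ ((2*S i+1)*(2*S i+1)))) by ring.
    apply Rmult_le_compat; auto. }
  assert (0 <= (x^8)^2) by (apply pow_le, pow_le; lra).
  assert (Hr0 : 0 <= 625/81 * (x^8)^2 < 1) by lra.
  assert (G := geom_bound b _ J Hr0 Hb Hr).
  assert (Hb0 : b O = 81 * (x * x^8)).
  { unfold b. simpl. ring. }
  rewrite Hb0 in G.
  assert (0 <= x * x^8) by (apply Rmult_le_pos; [lra|apply pow_le; lra]).
  assert (0 <= sum_f_R0 b J) by (apply sum_nonneg; auto).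
  nra.
Qed.

Lemma PI_bounds : 3 < PI <= 4.
Proof. split. assert (H := PI2_3_2). lra. apply PI_4. Qed.

Lemma key_w w : 0 <= w -> w <= 27/64 * exp w.
Proof.
  intros Hw.
  assert (H1 : 1 + w/4 <= exp (w/4)) by apply exp_ineq1_le.
  assert (H2 : (1 + w/4)^4 <= exp (w/4)^4) by (apply pow_incr; lra).
  assert (H3 : exp (w/4)^4 = exp w).
  { rewrite exp_pow_INR. f_equal. simpl. field. }
  set (z := 1 + w/4) in *.
  assert (Hz : 27*z^4 - 256*z + 256 = (3*z-4)^2*(3*z^2+8*z+16)) by ring.
  assert (0 <= (3*z-4)^2*(3*z^2+8*z+16)).
  { apply Rmult_le_pos. apply pow2_ge_0. nra. }
  assert (w = 4*(z-1)) by (unfold z; field).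
  nra.
Qed.

Definition psi (s:R) (j:nat) : R := exp (-(PI/4) * s * (2*INR j+1)^2).

Lemma term_bound s j : 0 < s ->
  s * (INR ((2*j+1)*(2*j+1)) ^ 1 * exp (-PI*s) ^ ((2*j+1)*(2*j+1)))
  <= 9/(16*PI) * psi s j.
Proof.
  intros Hs. rewrite pow_1, exp_pow_INR, INR_sq. unfold psi.
  set (M := (2 * INR j + 1)^2).
  assert (0 <= M) by (apply pow2_ge_0).
  set (v := s*M).
  assert (0 <= v) by (unfold v; nra).
  destruct PI_bounds as [Hp1 Hp2].
  set (w := 3*PI*v/4).
  assert (0 <= w) by (unfold w; nra).
  assert (Hk := key_w w H1).
  replace (M * (- PI * s)) with (-PI*v + 0) by (unfold v; ring).
  replace (- (PI / 4) * s * M) with (-PI*v + w) by (unfold w, v; field).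
  rewrite !exp_plus, exp_0.
  assert (0 < exp (-PI*v)) by apply exp_pos.
  replace (s * (M * (exp (- PI * v) * 1))) with (v * exp (-PI*v)) by (unfold v; ring).
  replace (9 / (16 * PI) * (exp (- PI * v) * exp w)) with
     (exp (- PI * v) * (4/(3*PI)) * (27/64 * exp w)) by (field; lra).
  replace (v * exp (- PI * v)) with (exp (- PI * v) * (4/(3*PI)) * w) by (unfold w; field; lra).
  apply Rmult_le_compat_l; auto.
  apply Rmult_le_pos. lra. apply Rlt_le, Rdiv_lt_0_compat; lra.
Qed.

Lemma exp_le' a b : a <= b -> exp a <= exp b.
Proof. intros H. destruct (Rle_lt_or_eq_dec a b H). left; apply exp_increasing; auto. subst; lra. Qed.

Lemma psi_le s i : 0 < s ->
  psi s (2*i+1) <= exp (-PI*s) ^ ((2*i+1)*(2*i+1)) /\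
  psi s (2*i+2) <= exp (-PI*s) ^ ((2*i+1)*(2*i+1)).
Proof.
  intros Hs. rewrite exp_pow_INR, INR_sq. unfold psi.
  rewrite !plus_INR, !mult_INR. simpl (INR 2). simpl (INR 1).
  assert (0 <= INR i) by apply pos_INR. destruct PI_bounds.
  split; apply exp_le'.
  - assert (0 <= PI * s * (INR i + 5/4)) by (apply Rmult_le_pos; nra). nra.
  - assert (0 <= PI * s * (INR i + 5/4)) by (apply Rmult_le_pos; nra).
    assert (0 <= PI * s) by nra. nra.
Qed.

Lemma psi_sum s n : 0 < s ->
  sum_f_R0 (psi s) (2*n+2) <= psi s 0 + 2 * G 0 (exp (-PI*s)) n.
Proof.
  intros Hs. unfold G. induction n as [|n IH].
  - simpl sum_f_R0 at 2. destruct (psi_le s 0 Hs) as [H1 H2].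
    change (sum_f_R0 (psi s) (2*0+2)) with (psi s 0 + psi s 1 + psi s 2).
    simpl in H1, H2. lra.
  - replace (2 * S n + 2)%nat with (S (S (2*n+2))) by lia.
    rewrite !sumS. destruct (psi_le s (S n) Hs) as [H1 H2].
    replace (S (2*n+2)) with (2 * S n + 1)%nat by lia.
    replace (S (2 * S n + 1)) with (2 * S n + 2)%nat by lia.
    rewrite pow_O, Rmult_1_l. lra.
Qed.

Lemma cv_affine u l a b : Un_cv u l -> Un_cv (fun n => a + b * u n) (a + b * l).
Proof.
  intros H. apply CV_plus. apply cv_const. apply CV_mult. apply cv_const. exact H.
Qed.

Lemma P_ge_x k u : 0 < u -> exp (-PI*u) <= P k u.
Proof.
  intros Hu. apply (lim_ge _ _ _ (P_lim k u Hu)). intros n. apply G_first, exp_pos.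
Qed.

Lemma P01 u : 0 < u -> P 0 u <= P 1 u.
Proof.
  intros Hu. eapply Rle_cv_lim; [|apply P_lim; auto|apply P_lim; auto].
  intros n. apply G01. left; apply exp_pos.
Qed.

Lemma exp1_lb : 8/3 <= exp 1.
Proof.
  assert (H := exp_ge_taylor 1 3 ltac:(lra)).
  simpl in H. lra.
Qed.

Lemma claim2_core s : 0 < s -> s <= 1/4 -> s * P 1 s <= P 0 s.
Proof.
  intros Hs Hs4. set (x := exp (-PI*s)).
  set (K := 9/(16*PI)).
  destruct PI_bounds as [Hp1 Hp2].
  assert (HK : 0 < K) by (unfold K; apply Rdiv_lt_0_compat; lra).
  assert (Hb : forall J, 0 + s * G 1 x J <= K * psi s 0 + 2 * K * G 0 x J).
  { intros J.
    assert (s * G 1 x J <= K * sum_f_R0 (psi s) J).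
    { unfold G. rewrite !scal_sum.
      apply sum_le_pw. intros i. rewrite Rmult_comm, (Rmult_comm _ K).
      apply term_bound; auto. }
    assert (sum_f_R0 (psi s) J <= sum_f_R0 (psi s) (2*J+2)).
    { apply sum_mono. intros; left; apply exp_pos. lia. }
    assert (H2 := psi_sum s J Hs). fold x in H2.
    assert (H3 : K * sum_f_R0 (psi s) J <= K * (psi s 0 + 2 * G 0 x J)).
    { apply Rmult_le_compat_l; lra. }
    lra. }
  assert (Hlim : 0 + s * P 1 s <= K * psi s 0 + 2 * K * P 0 s).
  { eapply Rle_cv_lim. exact Hb.
    apply cv_affine, P_lim; auto. apply cv_affine, P_lim; auto. }
  assert (Hpsi : psi s 0 <= 1).
  { unfold psi. apply Rle_trans with (exp 0); [apply exp_le'|rewrite exp_0; lra].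
    simpl INR. nra. }
  assert (Hx : 1 <= 3 * x).
  { unfold x. assert (exp (-1) <= exp (-PI*s)) by (apply exp_le'; nra).
    assert (exp (-1) * exp 1 = 1) by (rewrite <- exp_plus; replace (-1+1) with 0 by ring; apply exp_0).
    assert (H3 := exp_le_3). assert (0 < exp (-1)) by apply exp_pos. nra. }
  assert (Hx2 := P_ge_x 0 s Hs). fold x in Hx2.
  assert (K * 5 <= 1) by (unfold K; apply Rmult_le_reg_r with (16*PI); [lra|]; field_simplify; lra).
  nra.
Qed.

Lemma exp_m2PI : exp (-(2*PI)) <= 1/129.
Proof.
  destruct PI_bounds.
  assert (H1 : exp (-(2*PI)) <= exp (-6)) by (apply exp_le'; lra).
  assert (H2 : exp (-6) * exp 6 = 1) by (rewrite <- exp_plus; replace (-6+6) with 0 by ring; apply exp_0).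
  assert (H3 : exp 1 ^ 6 = exp 6) by (rewrite exp_pow_INR; f_equal; simpl; ring).
  assert (H4 : (8/3)^6 <= exp 1 ^ 6) by (apply pow_incr; split; [lra|apply exp1_lb]).
  assert (0 < exp (-6)) by apply exp_pos.
  rewrite H3 in H4. nra.
Qed.

Lemma y_bounds u : 1/4 <= u ->
  exp (-PI*u) ^ 8 <= 1/129 /\ PI * u * exp (-PI*u) ^ 8 <= 1/129.
Proof.
  intros Hu. destruct PI_bounds.
  rewrite exp_pow_INR. replace (INR 8 * (-PI*u)) with (-(8*PI*u)) by (simpl; ring).
  assert (Hm := exp_m2PI).
  assert (H1 : exp (-(8*PI*u)) <= exp (-(2*PI))) by (apply exp_le'; nra).
  split. lra.
  assert (H2 : 4*u <= exp (8*PI*u - 2*PI)).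
  { eapply Rle_trans; [|apply exp_le'].
    2: instantiate (1 := 4*u - 1); nra.
    assert (He := exp_ineq1_le (4*u-1)). lra. }
  assert (H3 : exp (8*PI*u - 2*PI) * exp (-(8*PI*u)) = exp (-(2*PI))).
  { rewrite <- exp_plus. f_equal. ring. }
  assert (0 < exp (-(8*PI*u))) by apply exp_pos.
  assert (4*u*exp (-(8*PI*u)) <= exp (-(2*PI))) by nra.
  nra.
Qed.

Definition Dd (u:R) := P 1 u * P 0 u - PI*u*(P 2 u * P 0 u - (P 1 u)^2).

Lemma Dd_pos u : 1/4 <= u -> 0 < Dd u.
Proof.
  intros Hu. assert (Hu0 : 0 < u) by lra.
  destruct (y_bounds u Hu) as [Hy Hzy].
  set (x := exp (-PI*u)) in *.
  set (y := x^8) in *.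
  assert (Hx : 0 < x < 1) by (apply exp_pos_lt1; auto).
  assert (Hy0 : 0 <= y) by (unfold y; apply pow_le; lra).
  assert (HA : P 0 u <= x * (1 + 100/99 * y)).
  { apply (lim_le _ _ _ (P_lim 0 u Hu0)). intros J. apply G0_upper; auto.
    fold y. nra. }
  assert (HC : P 2 u <= x * (1 + 8100/99 * y)).
  { apply (lim_le _ _ _ (P_lim 2 u Hu0)). intros J. apply G2_upper; auto.
    fold y. nra. }
  assert (HA1 := P_ge_x 0 u Hu0). assert (HB1 := P_ge_x 1 u Hu0). assert (HC1 := P_ge_x 2 u Hu0).
  fold x in HA1, HB1, HC1.
  destruct PI_bounds.
  set (A := P 0 u) in *. set (B := P 1 u) in *. set (C := P 2 u) in *.
  unfold Dd. fold A B C.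
  set (z := PI * u) in *. assert (0 <= z) by (unfold z; nra).
  assert (HBA : x*x <= B*A) by (apply Rmult_le_compat; lra).
  assert (HCA : C*A <= (x * (1 + 8100/99 * y)) * (x * (1 + 100/99 * y)))
    by (apply Rmult_le_compat; lra).
  assert (HBB : x*x <= B^2) by nra.
  assert (HE : C*A - B^2 <= x*x * (y * (8200/99 + 810000/9801*y))).
  { assert (Eq : (x * (1 + 8100/99 * y)) * (x * (1 + 100/99 * y)) - x*x
        = x*x * (y * (8200/99 + 810000/9801*y))) by field.
    lra. }
  assert (Hzy2 : z * y * (8200/99 + 810000/9801*y) < 1).
  { assert (0 <= z*y) by nra.
    assert (z*y*(8200/99 + 810000/9801*y) <= z*y*(8200/99 + 810000/9801*(1/129))).
    { apply Rmult_le_compat_l; lra. }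
    assert (z*y*(8200/99 + 810000/9801*(1/129)) <= 1/129*(8200/99 + 810000/9801*(1/129))).
    { apply Rmult_le_compat_r; lra. }
    lra. }
  assert (0 < x*x) by nra.
  assert (z * (C*A - B^2) <= z * (x*x * (y * (8200/99 + 810000/9801*y)))).
  { apply Rmult_le_compat_l; auto. }
  nra.
Qed.

Definition h0 (u:R) := -PI*u*P 1 u / P 0 u.

Lemma P0_pos u : 0 < u -> 0 < P 0 u.
Proof. intros Hu. assert (H := P_ge_x 0 u Hu). assert (0 < exp (-PI*u)) by apply exp_pos. lra. Qed.

Lemma h0_derive u : 0 < u -> derivable_pt_lim h0 u (-PI * Dd u / (P 0 u)^2).
Proof.
  intros Hu. apply is_derive_Reals.
  assert (Hf : is_derive (fun t => -PI*t) u (-PI)) by (auto_derive; auto; ring).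
  assert (H1 := is_derive_mult _ _ u _ _ Hf (P_derive 1 u Hu) Rmult_comm).
  assert (Hne : P 0 u <> 0) by (apply Rgt_not_eq, P0_pos; auto).
  assert (H2 := is_derive_div _ (P 0) u _ _ H1 (P_derive 0 u Hu) Hne).
  unfold h0. unfold mult, plus in H2; simpl in H2.
  replace (-PI * Dd u / (P 0 u)^2) with
   (((- PI * P 1 u + - PI * u * (- PI * P 2 u)) * P 0 u -
      - PI * u * P 1 u * (- PI * P 1 u)) / (P 0 u * (P 0 u * 1))).
  exact H2.
  unfold Dd. field. auto.
Qed.

Theorem mainTheorem15 :
  (exists d : R -> R, forall s, 0 < s -> derivable_pt_lim theta_o s (d s)) /\
  (forall d : R -> R,
     (forall s, 0 < s -> derivable_pt_lim theta_o s (d s)) ->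
     let h := fun s => s * d s / theta_o s in
     (forall s t, 1 / 4 <= s -> s < t -> h t < h s) /\
     (forall s, 0 < s -> s <= 1 / 4 -> h s >= d 1 / theta_o 1)).
Proof.
  split.
  - exists (fun s => -2*PI*P 1 s). intros s Hs. apply theta_deriv; auto.
  - intros d Hd h.
    assert (Hdeq : forall s, 0 < s -> d s = -2*PI*P 1 s).
    { intros s Hs. eapply uniqueness_limite; [apply Hd; auto|apply theta_deriv; auto]. }
    assert (Hh : forall s, 0 < s -> h s = h0 s).
    { intros s Hs. unfold h, h0. rewrite Hdeq, theta_eq by auto.
      assert (P 0 s <> 0) by (apply Rgt_not_eq, P0_pos; auto). field; auto. }
    destruct PI_bounds as [Hp1 Hp2].
    split.
    + intros s t Hs Hst. rewrite !Hh by lra.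
      destruct (MVT_cor2 h0 (fun u => -PI * Dd u / (P 0 u)^2) s t Hst) as [c [Hc1 Hc2]].
      { intros c Hc. apply h0_derive. lra. }
      assert (HD := Dd_pos c ltac:(lra)).
      assert (HP := P0_pos c ltac:(lra)).
      assert (0 < -(-PI * Dd c / P 0 c ^ 2)).
      { replace (-(-PI * Dd c / P 0 c ^ 2)) with (PI * Dd c / P 0 c ^ 2) by (field; lra).
        apply Rdiv_lt_0_compat. nra. apply pow_lt; auto. }
      nra.
    + intros s Hs Hs4. rewrite Hh by auto.
      rewrite Hdeq, theta_eq by lra.
      assert (H1 := claim2_core s Hs Hs4).
      assert (HP := P0_pos s Hs). assert (HP1 := P0_pos 1 ltac:(lra)).
      assert (H01 := P01 1 ltac:(lra)).
      unfold h0.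
      replace (-2 * PI * P 1 1 / (2 * P 0 1)) with (-PI * (P 1 1 / P 0 1)) by (field; lra).
      replace (- PI * s * P 1 s / P 0 s) with (-PI * (s * P 1 s / P 0 s)) by (field; lra).
      assert (s * P 1 s / P 0 s <= 1).
      { apply (Rmult_le_reg_r (P 0 s)); auto. field_simplify; lra. }
      assert (1 <= P 1 1 / P 0 1).
      { apply (Rmult_le_reg_r (P 0 1)); auto. field_simplify; lra. }
      nra.
Qed.
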